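(* Let $\mathcal{A}$ be a central S-ring over a finite group $G$. Then $\mathcal{A}$ is primitive if and only if its rational closure $\mathrm{tr}(\mathcal{A})$ is primitive.
   Context: For a finite group $G$ with identity $e$ and $X\subseteq G$, write $\underline{X}=\sum_{x\in X}x\in\mathbb{Z}G$. A subring $\mathcal{A}$ of $\mathbb{Z}G$ is an S-ring over $G$ if there is a partition $\mathcal{S}(\mathcal{A})$ of $G$ (basic sets) such that $\{e\}\in\mathcal{S}(\mathcal{A})$, $X\in\mathcal{S}(\mathcal{A})\Rightarrow X^{-1}\in\mathcal{S}(\mathcal{A})$, and $\mathcal{A}$ is the $\mathbb{Z}$-span of $\{\underline{X}: X\in\mathcal{S}(\mathcal{A})\}$. An $\mathcal{A}$-subgroup is a subgroup of $G$ that is a union of basic sets; $\mathcal{A}$ is primitive if its only $\mathcal{A}$-subgroups are $\{e\}$ and $G$. $\mathcal{A}$ is central if $\mathcal{A}\subseteq\mathcal{Z}(\mathbb{Z}G)$. For an integer $m$, $X^{(m)}=\{x^m:x\in X\}$; the trace of $X$ is $\mathrm{tr}(X)=\bigcup_{\gcd(m,|G|)=1}X^{(m)}$. The rational closure of a central S-ring $\mathcal{A}$ is $\mathrm{tr}(\mathcal{A})=\mathrm{Span}_{\mathbb{Z}}\{\underline{\mathrm{tr}(X)}: X\in\mathcal{S}(\mathcal{A})\}$, which is a central S-ring over $G$ with basic sets $\mathrm{tr}(X)$, $X\in\mathcal{S}(\mathcal{A})$. *)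

(* Defs.v *)
From HB Require Import structures.
From mathcomp Require Import all_boot all_order all_algebra all_fingroup.
Set Implicit Arguments. Unset Strict Implicit. Unset Printing Implicit Defensive.
Import GRing.Theory.

Section SRings.
Variable gT : finGroupType.
(* The finite group G is the whole type gT, i.e. [set: gT]. *)

(* Integral group ring ZG: functions gT -> int (a = sum_g a(g) g). *)
Definition zg := {ffun gT -> int}.

Definition zmul (a b : zg) : zg :=
  [ffun g => (\sum_(x : gT) a x * b (x^-1 * g)%g)%R].

Definition ind (X : {set gT}) : zg := [ffun g => Posz (g \in X)].

Definition in_span (S : {set {set gT}}) (a : zg) : Prop :=
  exists c : {set gT} -> int,
    a = [ffun g => (\sum_(X in S) c X * ind X g)%R].

(* S is the set of basic sets of an S-ring over G (the S-ring being the
   Z-span of the underline X, X in S, which must be a subring of ZG). *)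
Definition is_Sring (S : {set {set gT}}) : Prop :=
  [/\ partition S [set: gT],
      [set 1%g] \in S,
      (forall X, X \in S -> (X^-1)%g \in S) &
      (forall X Y, X \in S -> Y \in S -> in_span S (zmul (ind X) (ind Y)))].

Definition Sring_central (S : {set {set gT}}) : Prop :=
  forall a, in_span S a -> forall b : zg, zmul a b = zmul b a.

Definition Sring_subgroup (S : {set {set gT}}) (H : {group gT}) : Prop :=
  exists2 T : {set {set gT}}, T \subset S & (H : {set gT}) = cover T.

Definition Sring_primitive (S : {set {set gT}}) : Prop :=
  forall H : {group gT}, Sring_subgroup S H ->
    (H : {set gT}) = 1%g \/ (H : {set gT}) = [set: gT].

(* trace of X: union of X^(m), m coprime to |G|; since x^|G| = 1, it suffices
   to take representatives 0 <= m < |G| of the residues mod |G|. *)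
Definition trace (X : {set gT}) : {set gT} :=
  [set y | [exists x in X, [exists m : 'I_#|gT|,
             coprime m #|gT| && (y == (x ^+ m)%g)]]].

Definition rat_closure (S : {set {set gT}}) : {set {set gT}} :=
  [set trace X | X in S].

End SRings.

(* Main.v *)
Require Import Defs.
From HB Require Import structures.
From mathcomp Require Import all_boot all_order all_algebra all_fingroup.
Set Implicit Arguments. Unset Strict Implicit. Unset Printing Implicit Defensive.
Import GRing.Theory Num.Theory.

Section Aux.
Local Open Scope group_scope.
Variable gT : finGroupType.
Implicit Types S : {set {set gT}}.

Lemma sum_part S (c : {set gT} -> int) g : partition S [set: gT] ->
  (\sum_(X in S) c X * ind X g)%R = c (pblock S g).
Proof.
case/and3P => /eqP cov triv _.
have gS : g \in cover S by rewrite cov inE.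
rewrite (bigD1 (pblock S g)) ?pblock_mem //= big1 ?addr0.
  by rewrite /ind ffunE mem_pblock gS mulr1.
move=> X /andP [XS neX]; rewrite /ind ffunE.
case: (boolP (g \in X)) => gX; last by rewrite mulr0.
by move: neX; rewrite (def_pblock triv XS gX) eqxx.
Qed.

Lemma pblockM S (a b : gT) : is_Sring S ->
  pblock S (a * b)%g \subset (pblock S a * pblock S b)%g.
Proof.
case=> part _ _ mulS.
have cov : cover S = [set: gT] by case/and3P: part => /eqP.
have inc x : x \in cover S by rewrite cov inE.
set X := pblock S a; set Y := pblock S b.
have [c Hc] := mulS X Y (pblock_mem (inc a)) (pblock_mem (inc b)).
have Hv g : zmul (ind X) (ind Y) g = c (pblock S g).
  by rewrite Hc ffunE sum_part.
apply/subsetP => g Hg.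
have eqb : pblock S g = pblock S (a * b).
  by apply: same_pblock => //; case/and3P: part.
apply/negPn/negP => nXY.
have f0 : zmul (ind X) (ind Y) g = 0%R.
  rewrite /zmul ffunE big1 // => x _; rewrite /ind !ffunE.
  case: (boolP (x \in X)) => xX; last by rewrite mul0r.
  case: (boolP (x^-1 * g \in Y)) => yY; last by rewrite mulr0.
  by case/negP: nXY; rewrite -(mulKVg x g) mem_mulg.
have fpos : (0 < zmul (ind X) (ind Y) (a * b)%g)%R.
  rewrite /zmul ffunE (bigD1 a) //= /ind !ffunE mulKg.
  rewrite mem_pblock inc mem_pblock inc mul1r.
  apply: (@Order.POrderTheory.lt_le_trans _ _ 1%R) => //; rewrite lerDl.
  by apply: sumr_ge0 => x _; rewrite !ffunE mulr_ge0.
by move: fpos; rewrite Hv -eqb -Hv f0 Order.POrderTheory.ltxx.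
Qed.

Lemma pblockX S x k (H : {group gT}) : is_Sring S ->
  pblock S x \subset H -> pblock S (x ^+ k) \subset H.
Proof.
move=> SS Hx; elim: k => [|k IH].
  case: SS => part one _ _; rewrite expg0.
  rewrite (def_pblock _ one) ?inE //; last by case/and3P: part.
  by rewrite sub1set group1.
rewrite expgSr; apply: subset_trans (pblockM _ _ SS) _.
apply/subsetP => g /mulsgP [u v uH vH ->].
by rewrite groupM // ?(subsetP IH u uH) ?(subsetP Hx v vH).
Qed.

End Aux.

Theorem proposition3p2 (gT : finGroupType) (S : {set {set gT}}) :
  is_Sring S -> Sring_central S ->
  (Sring_primitive S <-> Sring_primitive (rat_closure S)).
Proof.
move=> SS _.
have [n1|n1] := leqP #|gT| 1.
  have all (H : {set {set gT}}) : Sring_primitive H.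
    move=> K _; right; apply/eqP; rewrite eqEcard subsetT cardsT /=.
    by apply: leq_trans n1 _; rewrite cardG_gt0.
  by split=> _; apply: all.
have part := SS; case: part => part _ _ _.
have cov : cover S = [set: gT] by case/and3P: part => /eqP.
have inc x : x \in cover S by rewrite cov inE.
have Xtr (X : {set gT}) : X \subset trace X.
  apply/subsetP => x xX; rewrite inE; apply/existsP; exists x.
  rewrite xX /=; apply/existsP; exists (Ordinal n1).
  by rewrite /= coprime1n expg1 eqxx.
split.
- move=> prim H [T TS defH]; apply: prim.
  exists [set pblock S h | h in H].
    by apply/subsetP => B /imsetP [h _ ->]; apply: pblock_mem.
  have sub h : h \in H -> pblock S h \subset H.
    move=> hH; have: h \in cover T by rewrite -defH.
    move=> /bigcupP [B BT hB].
    have /imsetP [X XS dB] := subsetP TS B BT.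
    move: hB; rewrite dB inE => /existsP [x /andP [xX /existsP [m /andP [_ /eqP ->]]]].
    apply: (@pblockX _ S x m H SS); rewrite (def_pblock _ XS xX); last by case/and3P: part.
    apply/subsetP => y yX; have ->: (y \in H) = (y \in cover T) by rewrite -defH.
    apply/bigcupP; exists B => //.
    by rewrite dB (subsetP (Xtr X)).
  apply/setP => h; apply/idP/bigcupP => [hH|[B /imsetP [h' h'H ->] hB]].
    by exists (pblock S h); [apply: imset_f | rewrite mem_pblock].
  exact: (subsetP (sub h' h'H)).
- move=> prim H [T TS defH]; apply: prim.
  exists [set trace X | X in T].
    by apply: imsetS.
  apply/setP => h; apply/idP/bigcupP => [|[B /imsetP [X XT ->] hB]].
    rewrite defH => /bigcupP [X XT hX].
    by exists (trace X); [apply: imset_f | rewrite (subsetP (Xtr X))].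
  move: hB; rewrite inE => /existsP [x /andP [xX /existsP [m /andP [_ /eqP ->]]]].
  apply: groupX; rewrite defH; apply/bigcupP; by exists X.
Qed.
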